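(* Let $A, B\in\mathbb{R}^{m\times n}$ with $m < n$, $b\in\mathbb{R}^m$, and $s\in\{-1, 1\}^n$. Let $A = M_A - N_A$ with $\operatorname{rank}(M_A) = m$. (a) Let $1\le p\le\infty$. If $\operatorname{diag}(s)M_A^\dagger b \geq 0$, $\operatorname{diag}(s)M_A^\dagger [N_A\operatorname{diag}(s) + B] \geq 0$ and $\|M_A^\dagger[N_A\operatorname{diag}(s) + B]\|_p< 1$, then there exists a nonnegative solution $y_*$ of the linear system $[A\operatorname{diag}(s)-B]y=b$ such that $x_* = \operatorname{diag}(s)y_*$ is a solution of $Ax-B|x|=b$. (b) If $\operatorname{diag}(s)M_A^\dagger b > 0$ and $\|M_A^\dagger [N_A \operatorname{diag}(s) + B]\|_{\infty} < \gamma/2$, where $\gamma = \dfrac{\min_i |(M_A^\dagger b)_i|}{\max_i |(M_A^\dagger b)_i|}$, then $Ax-B|x|=b$ has infinitely many solutions with the sign pattern $s$.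
   Context: $M^\dagger$ is the Moore–Penrose inverse; $|x|$ is the entrywise absolute value; $\operatorname{diag}(s)$ is the diagonal matrix with diagonal $s$. Vector/matrix inequalities are entrywise. $\|\cdot\|_p$ on matrices is the operator norm induced by the vector $p$-norm. A vector $x$ has sign pattern $s$ if $\operatorname{sign}(x_{(i)})=s_{(i)}$ for all $i$. *)

(* Defs.v *)
From HB Require Import structures.
From mathcomp Require Import all_boot all_order all_algebra.
From mathcomp Require Import all_classical all_reals.
From mathcomp Require Import exp.
Set Implicit Arguments. Unset Strict Implicit. Unset Printing Implicit Defensive.
Import Order.TTheory GRing.Theory Num.Theory.
Local Open Scope ring_scope.
Local Open Scope classical_set_scope.

Section Defs.
Variable R : realType.

Definition is_MP_inverse m n (M : 'M[R]_(m, n)) (X : 'M[R]_(n, m)) : Prop :=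
  [/\ M *m X *m M = M, X *m M *m X = X,
      (M *m X)^T = M *m X & (X *m M)^T = X *m M].

Definition mabs m n (M : 'M[R]_(m, n)) : 'M[R]_(m, n) :=
  \matrix_(i, j) `|M i j|.

Definition vnorm (p : \bar R) n (x : 'cV[R]_n) : R :=
  match p with
  | EFin r => powR (\sum_i powR `|x i 0| r) r^-1
  | +oo%E => \big[Num.max/0]_i `|x i 0|
  | -oo%E => 0
  end.

Definition opnorm (p : \bar R) m n (M : 'M[R]_(m, n)) : R :=
  sup [set vnorm p (M *m x) / vnorm p x | x in [set x : 'cV[R]_n | x != 0]].

Definition maxabs n (v : 'cV[R]_n) : R := \big[Num.max/0]_i `|v i 0|.
Definition minabs n (v : 'cV[R]_n) : R := \big[Num.min/maxabs v]_i `|v i 0|.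

Definition has_sign_pattern n (x : 'cV[R]_n) (s : 'rV[R]_n) : Prop :=
  forall i, Num.sg (x i 0) = s 0 i.

End Defs.

(* Main.v *)
Require Import Defs.
From HB Require Import structures.
From mathcomp Require Import all_boot all_order all_algebra.
From mathcomp Require Import all_classical all_reals.
From mathcomp Require Import exp.
From mathcomp Require Import lra.
Import Order.TTheory GRing.Theory Num.Theory.
Local Open Scope ring_scope.
Local Open Scope classical_set_scope.
Set Implicit Arguments. Unset Strict Implicit. Unset Printing Implicit Defensive.
Lemma vnorm_ge0 (R : realType) p n (x : 'cV[R]_n) : 0 <= vnorm p x.
Proof.
case: p => [r||] /=; first exact: powR_ge0; last by [].
by apply: (big_ind (fun y => 0 <= y)) => // a c a0 c0; rewrite le_max a0.
Qed.

Lemma vnorm_ge (R : realType) p n (x : 'cV[R]_n) i :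
  (1 <= p)%E -> `|x i 0| <= vnorm p x.
Proof.
case: p => [r||] hp; last by [].
  rewrite lee_fin in hp.
  have r0 : r != 0 by apply/eqP => r0; move: hp; rewrite r0 ler10.
  rewrite /vnorm.
  have -> : `|x i 0| = powR (powR `|x i 0| r) r^-1.
    by rewrite -powRrM mulfV // powRr1.
  apply: ge0_ler_powR.
  - by rewrite invr_ge0; apply: le_trans hp.
  - by rewrite nnegrE powR_ge0.
  - by rewrite nnegrE sumr_ge0 // => j _; apply: powR_ge0.
  rewrite (bigD1 i) //= lerDl sumr_ge0 // => j _; exact: powR_ge0.
rewrite /vnorm; exact: le_bigmax.
Qed.

Lemma vnorm_mono (R : realType) p n (x y : 'cV[R]_n) :
  (1 <= p)%E -> (forall i, `|x i 0| <= `|y i 0|) -> vnorm p x <= vnorm p y.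
Proof.
case: p => [r||] hp h; last by [].
  rewrite lee_fin in hp.
  have r0 : 0 <= r by apply: le_trans hp.
  rewrite /vnorm; apply: ge0_ler_powR.
  - by rewrite invr_ge0.
  - by rewrite nnegrE sumr_ge0 // => j _; apply: powR_ge0.
  - by rewrite nnegrE sumr_ge0 // => j _; apply: powR_ge0.
  apply: ler_sum => j _; apply: ge0_ler_powR => //; by rewrite nnegrE.
apply: bigmax_le => [|j _].
  by apply: (big_ind (fun y => 0 <= y)) => // a c a0 c0; rewrite le_max a0.
apply: le_trans (h j) _; exact: le_bigmax.
Qed.
Lemma vnorm_eqabs (R : realType) p n (x y : 'cV[R]_n) :
  (forall i, `|x i 0| = `|y i 0|) -> vnorm p x = vnorm p y.
Proof.
move=> h; case: p => [r||].
- rewrite /vnorm; congr (powR _ _); apply: eq_bigr => i _; by rewrite h.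
- rewrite /vnorm; apply: eq_bigr => i _; by rewrite h.
- by [].
Qed.


Definition Kp (R : realType) (p : \bar R) (n : nat) : R :=
  match p with EFin r => powR n%:R r^-1 | _ => 1 end.

Lemma Kp_ge0 (R : realType) (p : \bar R) n : 0 <= Kp p n.
Proof. case: p => [r||]; rewrite /Kp ?ler01 //; exact: powR_ge0. Qed.

Lemma maxabs_ge0 (R : realType) n (x : 'cV[R]_n) : 0 <= maxabs x.
Proof.
by rewrite /maxabs; apply: (big_ind (fun y => 0 <= y)) => // a c a0 c0; rewrite le_max a0.
Qed.

Lemma vnorm_le_max (R : realType) p n (x : 'cV[R]_n) :
  (1 <= p)%E -> vnorm p x <= Kp p n * maxabs x.
Proof.
case: p => [r||] hp; last by [].
2: by rewrite /Kp mul1r.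
rewrite lee_fin in hp.
have r0 : r != 0 by apply/eqP => r0; move: hp; rewrite r0 ler10.
have r0' : 0 <= r by apply: le_trans hp.
have hM := maxabs_ge0 x.
rewrite /Kp /vnorm.
have -> : powR n%:R r^-1 * maxabs x = powR (n%:R * powR (maxabs x) r) r^-1.
  by rewrite powRM ?powR_ge0 // -powRrM mulfV // powRr1.
apply: ge0_ler_powR.
- by rewrite invr_ge0.
- by rewrite nnegrE sumr_ge0 // => j _; apply: powR_ge0.
- by rewrite nnegrE mulr_ge0 // powR_ge0.
have -> : n%:R * powR (maxabs x) r = \sum_(i < n) powR (maxabs x) r.
  by rewrite sumr_const card_ord mulr_natl.
apply: ler_sum => i _; apply: ge0_ler_powR => //; rewrite ?nnegrE //.
exact: le_bigmax.
Qed.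

Lemma maxabs_le_vnorm (R : realType) p n (x : 'cV[R]_n) :
  (1 <= p)%E -> maxabs x <= vnorm p x.
Proof.
move=> hp; apply: bigmax_le => [|i _]; first exact: vnorm_ge0.
exact: vnorm_ge.
Qed.

Lemma mulmx_maxabs (R : realType) m n (M : 'M[R]_(m, n)) (x : 'cV[R]_n) :
  maxabs (M *m x) <= (\sum_i \sum_j `|M i j|) * maxabs x.
Proof.
have hM := maxabs_ge0 x.
have hS : forall i, 0 <= \sum_j `|M i j| by move=> i; rewrite sumr_ge0.
apply: bigmax_le => [|i _].
  by rewrite mulr_ge0 // sumr_ge0.
rewrite mxE; apply: le_trans (ler_norm_sum _ _ _) _.
apply: (@le_trans _ _ ((\sum_j `|M i j|) * maxabs x)).
  rewrite mulr_suml; apply: ler_sum => j _; rewrite normrM.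
  by apply: ler_wpM2l => //; apply: le_bigmax.
apply: ler_wpM2r => //.
rewrite (bigD1 i) //= lerDl sumr_ge0 //.
Qed.

Lemma vnorm_pos (R : realType) p n (x : 'cV[R]_n) :
  (1 <= p)%E -> x != 0 -> 0 < vnorm p x.
Proof.
move=> hp hx.
have [i hi] : exists i, x i 0 != 0.
  case: (boolP [exists i, x i 0 != 0]) => [/existsP //|].
  rewrite negb_exists => /forallP h; move/eqP: hx; case.
  apply/matrixP => i j; rewrite (ord1 j) mxE.
  by move: (h i); rewrite negbK => /eqP.
by apply: lt_le_trans (vnorm_ge x i hp); rewrite normr_gt0.
Qed.

Lemma opnorm_ub (R : realType) p m n (M : 'M[R]_(m, n)) (x : 'cV[R]_n) :
  (1 <= p)%E -> x != 0 -> vnorm p (M *m x) / vnorm p x <= opnorm p M.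
Proof.
move=> hp hx.
pose K := Kp p m * (\sum_i \sum_j `|M i j|).
have hK : forall z : 'cV[R]_n, z != 0 -> vnorm p (M *m z) / vnorm p z <= K.
  move=> z hz; rewrite ler_pdivrMr ?vnorm_pos //.
  apply: le_trans (vnorm_le_max _ hp) _.
  rewrite /K -mulrA; apply: ler_wpM2l; first exact: Kp_ge0.
  apply: le_trans (mulmx_maxabs _ _) _.
  apply: ler_wpM2l; first by rewrite sumr_ge0 // => i _; rewrite sumr_ge0.
  exact: maxabs_le_vnorm.
apply: ub_le_sup; last by exists x.
by exists K => _ [z hz <-]; apply: hK.
Qed.

Lemma opnorm_bound (R : realType) p m n (M : 'M[R]_(m, n)) (x : 'cV[R]_n) :
  (1 <= p)%E -> x != 0 -> vnorm p (M *m x) <= opnorm p M * vnorm p x.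
Proof.
move=> hp hx; rewrite -ler_pdivrMr ?vnorm_pos //; exact: opnorm_ub.
Qed.

Lemma opnorm_ge0 (R : realType) p m n (M : 'M[R]_(m, n)) :
  (1 <= p)%E -> (0 < n)%N -> 0 <= opnorm p M.
Proof.
move=> hp hn; pose x : 'cV[R]_n := const_mx 1.
have hx : x != 0.
  apply/eqP => /matrixP /(_ (Ordinal hn) 0); rewrite !mxE => /eqP; by rewrite oner_eq0.
apply: le_trans (opnorm_ub M hp hx).
by rewrite divr_ge0 ?vnorm_ge0.
Qed.


Lemma unit_I_sub (R : realType) n (T : 'M[R]_n) :
  (forall u : 'cV[R]_n, u != 0 -> T *m u = u -> False) -> (1%:M - T) \in unitmx.
Proof.
move=> h; rewrite unitmxE unitfE -det_tr; apply/negP => /det0P [v nv hv].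
apply: (h v^T).
  by apply: contra nv => /eqP hv0; apply/eqP; rewrite -(trmxK v) hv0 trmx0.
have : (v *m (1%:M - T)^T)^T = 0 by rewrite hv trmx0.
rewrite trmx_mul trmxK mulmxBl mul1mx => /eqP; rewrite subr_eq0 => /eqP <-.
by [].
Qed.

Lemma diag_abs (R : realType) n (s : 'rV[R]_n) (v : 'cV[R]_n) :
  (forall i, s 0 i = 1 \/ s 0 i = -1) -> forall i, `|(diag_mx s *m v) i 0| = `|v i 0|.
Proof.
move=> hs i; rewrite mul_diag_mx mxE normrM.
by case: (hs i) => ->; rewrite ?normrN normr1 mul1r.
Qed.

Lemma diag_sq (R : realType) n (s : 'rV[R]_n) :
  (forall i, s 0 i = 1 \/ s 0 i = -1) -> diag_mx s *m diag_mx s = 1%:M.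
Proof.
move=> hs; apply/matrixP => i j; rewrite mul_diag_mx !mxE.
case: (i == j); last by rewrite mulr0.
by case: (hs i) => ->; rewrite ?mulrNN mulr1.
Qed.

Lemma mp_right_inv (R : realType) m n (MA : 'M[R]_(m, n)) (MAd : 'M[R]_(n, m)) :
  \rank MA = m -> MA *m MAd *m MA = MA -> MA *m MAd = 1%:M.
Proof.
move=> hr h.
have hf : row_free MA by rewrite /row_free hr.
apply: (row_free_inj hf); by rewrite /= h mul1mx.
Qed.

Lemma kernel_vec (R : realType) m n (MA : 'M[R]_(m, n)) :
  (m < n)%N -> \rank MA = m -> exists w : 'cV[R]_n, w != 0 /\ MA *m w = 0.
Proof.
move=> hmn hr.
have hk : \rank (kermx MA^T) = (n - m)%N by rewrite mxrank_ker mxrank_tr hr.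
have [i hi] : exists i, row i (kermx MA^T) != 0.
  case: (boolP [exists i, row i (kermx MA^T) != 0]) => [/existsP //|].
  rewrite negb_exists => /forallP h.
  have : kermx MA^T = 0.
    apply/row_matrixP => i; rewrite row0; by move: (h i); rewrite negbK => /eqP.
  move=> h0; move: hk; rewrite h0 mxrank0 => /eqP; rewrite eq_sym subn_eq0 leqNgt hmn.
  by [].
exists (row i (kermx MA^T))^T; split.
  by apply: contra hi => /eqP h0; apply/eqP; rewrite -(trmxK (row _ _)) h0 trmx0.
have := row_sub i (kermx MA^T); move/sub_kermxP => h.
by apply: trmx_inj; rewrite trmx_mul trmxK h trmx0.
Qed.


Lemma contr_aux (R : realType) (a c t : R) : a <= c -> c <= t * a -> 0 < a -> t < 1 -> False.
Proof. move=> h1 h2 h3 h4; nra. Qed.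

Lemma part_a (R : realType) m n (A B MA NA : 'M[R]_(m, n)) (MAd : 'M[R]_(n, m))
  (b : 'cV[R]_m) (s : 'rV[R]_n) (p : \bar R) :
  (forall i, s 0 i = 1 \/ s 0 i = -1) -> A = MA - NA -> MA *m MAd = 1%:M ->
  (1 <= p)%E ->
     (forall i j, 0 <= (diag_mx s *m MAd *m b) i j) ->
     (forall i j, 0 <= (diag_mx s *m MAd *m (NA *m diag_mx s + B)) i j) ->
     opnorm p (MAd *m (NA *m diag_mx s + B)) < 1 ->
     exists y : 'cV[R]_n,
       (forall i j, 0 <= y i j) /\
       (A *m diag_mx s - B) *m y = b /\
       A *m (diag_mx s *m y) - B *m mabs (diag_mx s *m y) = b.
Proof.
move=> hs hA hMM hp hc hT hn.
have hDD := diag_sq hs.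
move: hc hT hn hDD; set D := diag_mx s => hc hT hn hDD.
set C := MAd *m (NA *m D + B).
set c := D *m MAd *m b.
set T := D *m C.
have hTe : forall i j, 0 <= T i j by move=> i j; rewrite /T /C mulmxA; exact: hT.
have hTb : forall x, x != 0 -> vnorm p (T *m x) <= opnorm p C * vnorm p x.
  move=> x hx; rewrite /T -mulmxA (@vnorm_eqabs _ p _ _ (C *m x)).
    exact: opnorm_bound.
  exact: diag_abs.
have hU : (1%:M - T) \in unitmx.
  apply: unit_I_sub => u hu hTu.
  have := hTb u hu; rewrite hTu => h.
  exact: (contr_aux (lexx _) h (vnorm_pos hp hu) hn).
set y := invmx (1%:M - T) *m c.
have hy : y = c + T *m y.
  have : (1%:M - T) *m y = c by rewrite /y mulmxA mulmxV // mul1mx.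
  by rewrite mulmxBl mul1mx => /eqP; rewrite subr_eq => /eqP.
have hy0 : forall i, 0 <= y i 0.
  pose z : 'cV[R]_n := \col_i Num.max (- y i 0) 0.
  have hz0 : forall i, 0 <= z i 0 by move=> i; rewrite mxE le_max lexx orbT.
  have hz : forall i, z i 0 <= (T *m z) i 0.
    move=> i; rewrite [z i 0]mxE ge_max; apply/andP; split; last first.
      rewrite mxE; apply: sumr_ge0 => j _; apply: mulr_ge0 => //.
    have -> : - y i 0 = - c i 0 + (T *m (- y)) i 0.
      by rewrite {1}hy mulmxN !mxE opprD.
    apply: (@le_trans _ _ ((T *m (- y)) i 0)).
      rewrite -[X in _ <= X]add0r; apply: lerD => //; rewrite oppr_le0; exact: hc.
    rewrite !mxE; apply: ler_sum => j _; apply: ler_wpM2l => //; rewrite !mxE le_max lexx //.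
  have z0 : z = 0.
    case: (eqVneq z 0) => // hzn; exfalso.
    have h1 : vnorm p z <= vnorm p (T *m z).
      apply: vnorm_mono => // i; rewrite (ger0_norm (hz0 i)) ger0_norm //.
      exact: le_trans (hz i).
    exact: (contr_aux h1 (hTb z hzn) (vnorm_pos hp hzn) hn).
  move=> i; have : - y i 0 <= z i 0 by rewrite [z i 0]mxE le_max lexx.
  by rewrite z0 [(0 : 'cV[R]_n) i 0]mxE oppr_le0.
have e1 : D *m c = MAd *m b by rewrite /c !mulmxA hDD mul1mx.
have e2 : D *m (T *m y) = C *m y by rewrite /T !mulmxA hDD mul1mx.
have key : MA *m (D *m y) = b + (NA *m D + B) *m y.
  rewrite {1}hy mulmxDr e1 e2 mulmxDr (mulmxA MA) hMM mul1mx /C.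
  by rewrite (mulmxA MA) (mulmxA MA) hMM mul1mx.
have eq1 : (A *m D - B) *m y = b.
  rewrite hA mulmxBl mulmxBl mulmxBl -mulmxA key mulmxDl.
  rewrite -mulmxA.
  set X := NA *m (D *m y); set Y := B *m y.
  by rewrite addrA (addrAC b) addrK addrK.
exists y; split; first by move=> i j; rewrite (ord1 j).
split; first exact: eq1.
have hab : mabs (D *m y) = y.
  apply/matrixP => i j; rewrite (ord1 j) /mabs mxE diag_abs // ger0_norm //.
by rewrite hab mulmxA -mulmxBl eq1.
Qed.

Lemma aux_delta (R : realType) (t cmin cmax : R) :
  0 <= t -> t * (2 * cmax) < cmin -> cmin <= cmax -> 0 < cmax ->
  0 < cmin * (1 - t) - t * cmax /\ t < 1.
Proof. move=> h1 h2 h3 h4; split; nra. Qed.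

Lemma aux_pos (R : realType) (t cmin cmax d Y yi : R) :
  d = cmin * (1 - t) - t * cmax -> 0 <= t -> t < 1 -> 0 < d ->
  Y <= cmax + d / 2 + t * Y -> cmin - d / 2 - t * Y <= yi -> 0 < yi.
Proof.
move=> hd h0 h1 h2 h3 h4.
have h5 : t * ((1 - t) * Y) <= t * (cmax + d / 2) by apply: ler_wpM2l => //; lra.
have h6 : (1 - t) * (cmin - d / 2 - t * Y) <= (1 - t) * yi by apply: ler_wpM2l => //; lra.
have h7 : 0 < (1 - t) * yi by nra.
by rewrite pmulr_rgt0 in h7; lra.
Qed.

Lemma aux_cp (R : realType) (cj ej cmin cmax d : R) :
  0 < cj -> cmin <= cj -> cj <= cmax -> `|ej| <= d / 2 ->
  `|cj + ej| <= cmax + d / 2 /\ cmin - d / 2 <= cj + ej.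
Proof.
move=> h0 h1 h2 h3.
have h4 := ler_normD cj ej.
have h5 := ler_norm (- ej); rewrite normrN in h5.
rewrite (gtr0_norm h0) in h4.
split; lra.
Qed.

Lemma entry_add (R : realType) n (c v : 'cV[R]_n) i : (c + v) i 0 = c i 0 + v i 0.
Proof. by rewrite !mxE. Qed.

Lemma entry_addscale (R : realType) n (c v : 'cV[R]_n) (e : R) i :
  (c + e *: v) i 0 = c i 0 + e * v i 0.
Proof. by rewrite !mxE. Qed.

Lemma entry_diag (R : realType) n (s : 'rV[R]_n) (y : 'cV[R]_n) i :
  (diag_mx s *m y) i 0 = s 0 i * y i 0.
Proof. by rewrite mul_diag_mx mxE. Qed.

Lemma part_b (R : realType) m n (A B MA NA : 'M[R]_(m, n)) (MAd : 'M[R]_(n, m))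
  (b : 'cV[R]_m) (s : 'rV[R]_n) :
  (m < n)%N -> (forall i, s 0 i = 1 \/ s 0 i = -1) -> A = MA - NA ->
  MA *m MAd = 1%:M -> (exists w : 'cV[R]_n, w != 0 /\ MA *m w = 0) ->
  (forall i j, 0 < (diag_mx s *m MAd *m b) i j) ->
   opnorm +oo%E (MAd *m (NA *m diag_mx s + B))
     < (minabs (MAd *m b) / maxabs (MAd *m b)) / 2 ->
   infinite_set [set x : 'cV[R]_n |
     A *m x - B *m mabs x = b /\ has_sign_pattern x s].
Proof.
move=> hmn hs hA hMM [w0 [hw0 hMw0]] hc hn.
have hDD := diag_sq hs.
have hDabs := diag_abs _ hs.
move: hc hn hDD hDabs; set D := diag_mx s => hc hn hDD hDabs.
set C := MAd *m (NA *m D + B).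
set c := D *m MAd *m b.
set T := D *m C.
have hn0 : (0 < n)%N by apply: leq_ltn_trans hmn.
pose i0 : 'I_n := Ordinal hn0.
have hp : (1 <= +oo :> \bar R)%E by rewrite leey.
set t := opnorm +oo%E C.
set cmin := minabs (MAd *m b).
set cmax := maxabs (MAd *m b).
have t0 : 0 <= t := opnorm_ge0 C hp hn0.
have hTb : forall x, vnorm +oo%E (T *m x) <= t * vnorm +oo%E x.
  move=> x; case: (eqVneq x 0) => [->|hx].
    rewrite mulmx0; apply: le_trans (_ : 0 <= _); last by rewrite mulr_ge0 // vnorm_ge0.
    apply: bigmax_le => // i _; by rewrite mxE normr0.
  rewrite /T -mulmxA (@vnorm_eqabs _ _ _ _ (C *m x)).
    exact: opnorm_bound.
  exact: hDabs.
have hci : forall i, c i 0 = `|(MAd *m b) i 0|.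
  move=> i; rewrite -(hDabs (MAd *m b) i) mulmxA gtr0_norm //; exact: hc.
have hcmin : forall i, cmin <= c i 0 by move=> i; rewrite hci; exact: bigmin_le.
have hcmax : forall i, c i 0 <= cmax by move=> i; rewrite hci; exact: le_bigmax.
have cmax0 : 0 < cmax := lt_le_trans (hc i0 0) (hcmax i0).
have hn' : t * (2 * cmax) < cmin.
  move: hn; rewrite -/t -/cmin -/cmax ltr_pdivlMr // ltr_pdivlMr // => h.
  by rewrite mulrA.
have hcmm : cmin <= cmax := le_trans (hcmin i0) (hcmax i0).
have [hd ht1] := aux_delta t0 hn' hcmm cmax0.
move: hd; set d := cmin * (1 - t) - t * cmax => hd.
have wm0 : 0 < maxabs w0 := vnorm_pos (p := +oo%E) hp hw0.
set wmax := maxabs w0.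
pose a := d / (2 * wmax).
have a0 : 0 < a by rewrite /a divr_gt0 // mulr_gt0.
pose w := a *: w0.
have hwi : forall i, `|(D *m w) i 0| <= d / 2.
  move=> i; rewrite hDabs /w mxE normrM (gtr0_norm a0).
  have -> : d / 2 = a * wmax by rewrite /a invfM mulrA mulfVK ?gt_eqF // mulrAC.
  apply: ler_wpM2l; [exact: ltW | exact: le_bigmax].
have hMw : MA *m w = 0 by rewrite /w -scalemxAr hMw0 scaler0.
have hw : D *m w != 0.
  apply/eqP => h0; move: hw0; have : D *m (D *m w) = w by rewrite mulmxA hDD mul1mx.
  rewrite h0 mulmx0 /w => /eqP; rewrite eq_sym scaler_eq0 (gt_eqF a0) /= => /eqP ->.
  by rewrite eqxx.
have hTe : forall x : 'cV[R]_n, (1%:M - T) *m x = 0 -> x = 0.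
  move=> x hx; case: (eqVneq x 0) => // hx0; exfalso.
  move: hx; rewrite mulmxBl mul1mx => /eqP; rewrite subr_eq0 => /eqP hx.
  have := hTb x; rewrite -hx => h.
  have := vnorm_pos hp hx0 => h2.
  move: ht1 => h3.
  have : vnorm +oo%E x <= t * vnorm +oo%E x by [].
  move=> h4; have : (1 - t) * vnorm +oo%E x <= 0 by rewrite mulrBl mul1r subr_le0.
  by rewrite pmulr_rle0 ?subr_gt0 // leNgt h2.
have hU : (1%:M - T) \in unitmx.
  apply: unit_I_sub => u hu hTu; move/eqP: hu; apply; apply: hTe.
  by rewrite mulmxBl mul1mx hTu subrr.
pose eps (k : nat) : R := (k.+1%:R)^-1.
have eps0 : forall k, 0 < eps k by move=> k; rewrite /eps invr_gt0 ltr0n.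
have eps1 : forall k, eps k <= 1 by move=> k; rewrite /eps invf_le1 ?ltr0n // ler1n.
pose cp (k : nat) := c + eps k *: (D *m w).
pose yk (k : nat) := invmx (1%:M - T) *m cp k.
pose xk (k : nat) := D *m yk k.
have hyk : forall k, yk k = cp k + T *m yk k.
  move=> k; have : (1%:M - T) *m yk k = cp k by rewrite /yk mulmxA mulmxV // mul1mx.
  by rewrite mulmxBl mul1mx => /eqP; rewrite subr_eq => /eqP.
have hpos : forall k i, 0 < yk k i 0.
  move=> k i.
  pose Y := maxabs (yk k).
  have Y0 : 0 <= Y := maxabs_ge0 (yk k).
  have hTy : forall j, `|(T *m yk k) j 0| <= t * Y.
    move=> j; apply: le_trans (vnorm_ge _ j hp) _; exact: hTb.
  have hcp : forall j, `|cp k j 0| <= cmax + d / 2 /\ cmin - d / 2 <= cp k j 0.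
    move=> j; rewrite /cp entry_addscale.
    apply: aux_cp; [exact: hc | exact: hcmin | exact: hcmax |].
    rewrite normrM (gtr0_norm (eps0 k)); apply: le_trans (hwi j).
    rewrite -[X in _ <= X]mul1r; apply: ler_wpM2r => //.
  have hY : Y <= cmax + d / 2 + t * Y.
    apply: bigmax_le => [|j _].
      by rewrite addr_ge0 ?mulr_ge0 // addr_ge0 ?divr_ge0 // ltW.
    rewrite {1}(hyk k) entry_add; apply: le_trans (ler_normD _ _) _.
    by apply: lerD; [case: (hcp j) | exact: hTy].
  have hyi : cmin - d / 2 - t * Y <= yk k i 0.
    rewrite {1}(hyk k) entry_add; apply: lerD; first by case: (hcp i).
    rewrite lerNl; apply: le_trans (hTy i); rewrite -normrN; exact: ler_norm.
  exact: (aux_pos (erefl d) t0 ht1 hd hY hyi).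
have e1 : D *m c = MAd *m b by rewrite /c !mulmxA hDD mul1mx.
have e2 : forall y : 'cV[R]_n, D *m (T *m y) = C *m y by move=> y; rewrite /T (mulmxA D) (mulmxA D) hDD mul1mx.
have e3 : forall k, D *m cp k = MAd *m b + eps k *: w.
  by move=> k; rewrite /cp mulmxDr e1 -scalemxAr mulmxA hDD mul1mx.
have hab : forall k, mabs (xk k) = yk k.
  move=> k; apply/matrixP => i j; rewrite (ord1 j) /mabs mxE /xk hDabs.
  by rewrite gtr0_norm // hpos.
have heq : forall k, A *m xk k - B *m mabs (xk k) = b.
  move=> k; rewrite hab.
  have key : MA *m (D *m yk k) = b + (NA *m D + B) *m yk k.
    rewrite {1}(hyk k) mulmxDr e3 e2 mulmxDr mulmxDr (mulmxA MA) hMM mul1mx.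
    rewrite -scalemxAr hMw scaler0 addr0 /C.
    by rewrite (mulmxA MA) (mulmxA MA) hMM mul1mx.
  rewrite /xk hA mulmxBl key mulmxDl -(mulmxA NA).
  set X := NA *m (D *m yk k); set Y := B *m yk k.
  by rewrite addrA (addrAC b) addrK addrK.
have hsg : forall k, has_sign_pattern (xk k) s.
  move=> k i; rewrite /xk entry_diag sgrM (gtr0_sg (hpos k i)) mulr1.
  by case: (hs i) => ->; [exact: sgr1 | exact: sgrN1].
have hinj : injective xk.
  move=> k1 k2 h.
  have hy : yk k1 = yk k2.
    have h1 : forall k, D *m xk k = yk k by move=> k; rewrite /xk mulmxA hDD mul1mx.
    by rewrite -h1 h h1.
  have : cp k1 = cp k2.
    by rewrite -(mulKVmx hU (cp k1)) -(mulKVmx hU (cp k2)) -/(yk k1) -/(yk k2) hy.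
  rewrite /cp => /addrI /eqP; rewrite -subr_eq0 -scalerBl scaler_eq0 (negbTE hw) orbF.
  rewrite subr_eq0 => /eqP; rewrite /eps => /invr_inj /eqP; rewrite eqr_nat eqSS.
  by move/eqP.
move=> hfin.
have hall : xk @^-1` [set x : 'cV[R]_n |
     A *m x - B *m mabs x = b /\ has_sign_pattern x s] = setT.
  apply/seteqP; split; first by [].
  move=> k _; split; [exact: heq | exact: hsg].
apply: infinite_nat; rewrite -hall.
by apply: finite_preimage => // k1 k2 _ _; exact: hinj.
Qed.

Unset Implicit Arguments.

Theorem theorem3p6 (R : realType) (m n : nat)
  (A B MA NA : 'M[R]_(m, n)) (MAd : 'M[R]_(n, m)) (b : 'cV[R]_m)
  (s : 'rV[R]_n) :
  (m < n)%N ->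
  (forall i, s 0 i = 1 \/ s 0 i = -1) ->
  A = MA - NA ->
  \rank MA = m ->
  is_MP_inverse MA MAd ->
  (* (a) *)
  (forall p : \bar R, (1 <= p)%E ->
     (forall i j, 0 <= (diag_mx s *m MAd *m b) i j) ->
     (forall i j, 0 <= (diag_mx s *m MAd *m (NA *m diag_mx s + B)) i j) ->
     opnorm p (MAd *m (NA *m diag_mx s + B)) < 1 ->
     exists y : 'cV[R]_n,
       (forall i j, 0 <= y i j) /\
       (A *m diag_mx s - B) *m y = b /\
       A *m (diag_mx s *m y) - B *m mabs (diag_mx s *m y) = b)
  /\
  (* (b) *)
  ((forall i j, 0 < (diag_mx s *m MAd *m b) i j) ->
   opnorm +oo%E (MAd *m (NA *m diag_mx s + B))
     < (minabs (MAd *m b) / maxabs (MAd *m b)) / 2 ->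
   infinite_set [set x : 'cV[R]_n |
     A *m x - B *m mabs x = b /\ has_sign_pattern x s]).
Proof.
move=> hmn hs hA hr hMP.
have hMM : MA *m MAd = 1%:M.
  by case: hMP => h1 _ _ _; exact: mp_right_inv hr h1.
split.
- move=> p hp hc hT hn; exact: part_a hs hA hMM hp hc hT hn.
- move=> hc hn; exact: part_b hmn hs hA hMM (kernel_vec hmn hr) hc hn.
Qed.
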